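(* Let $\Lambda^*$ be a factorial language in $(\mathbb F_+^d)^N$. If $\Lambda^*$ is sofic, then $\Lambda^*$ coincides with the labeled path space $\{\mathfrak L(\lambda):\lambda\in\Lambda\}$ of its follower set graph $(\Lambda,\mathfrak L)$. Conversely, if $\Lambda^*$ coincides with the labeled path space of a labeled higher rank $N$-graph with finitely many vertices, then $\Lambda^*$ is sofic.
   Context: $\mathbb F_+^d$ is the free semigroup (words) on letters $[d]=\{1,\dots,d\}$ with empty word $\emptyset$. In $(\mathbb F_+^d)^N$: $\underline\mu*\underline\nu=(\mu_1\nu_1,\dots,\mu_N\nu_N)$; $|\underline\mu|=(|\mu_1|,\dots,|\mu_N|)\in\mathbb Z_+^N$; $\delta_i(k)$ is the element with the one-letter word $k$ in coordinate $i$ and $\emptyset$ elsewhere; $\underline\nu$ is a subword of $\underline\mu$ if $\underline\mu=\underline w*\underline\nu*\underline q$. A factorial language (FL) is $\Lambda^*\subseteq(\mathbb F_+^d)^N$ such that for every $i\in[N]$ some $\delta_i(k)\in\Lambda^*$, and subwords of elements of $\Lambda^*$ lie in $\Lambda^*$. For $\underline n\in\mathbb Z_+^N$, $\underline\mu\sim_{\underline n}\underline\nu$ iff $\{\underline w:\underline w*\underline\mu\in\Lambda^*,|\underline w|\le\underline n\}=\{\underline w:\underline w*\underline\nu\in\Lambda^*,|\underline w|\le\underline n\}$, and $\underline\mu\sim\underline\nu$ iff $\{\underline w:\underline w*\underline\mu\in\Lambda^*\}=\{\underline w:\underline w*\underline\nu\in\Lambda^*\}$ (on $\Lambda^*$);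 $\Omega=\Lambda^*/\sim$. $\Lambda^*$ is sofic if there is $\underline m$ with $\sim_{\underline n}=\sim$ for all $\underline n\ge\underline m$ (equivalently $\Omega$ finite). A higher rank $N$-graph: a countable small category $\Lambda$ with functor $d:\Lambda\to\mathbb Z_+^N$ with unique factorization (for $d(\lambda)=\underline m+\underline n$ unique $\lambda=\mu\nu$ with $d(\mu)=\underline m,d(\nu)=\underline n$); paths compose right to left, $\lambda\mu$ defined when $s(\lambda)=r(\mu)$. A labeled higher rank $N$-graph $(\Lambda,\mathfrak L)$: $\Lambda$ arises as the path category of a directed graph with edge set $E=E_1\cup\dots\cup E_N$ (colours) modulo an equivalence on paths, with $d$ counting edges of each colour; $\mathfrak L:E\to(\mathbb F_+^d)^N$ with $\mathfrak L(e)\in\{\delta_i(k):k\in[d]\}$ for $e\in E_i$, extended to paths by $\mathfrak L(e_1\cdots e_n)=\mathfrak L(e_1)*\cdots*\mathfrak L(e_n)$ (vertices labeled by $(\emptyset,\dots,\emptyset)$), and compatible with the equivalence, so $\mathfrak L$ is well-defined on $\Lambda$ with $|\mathfrak L(\lambda)|=d(\lambda)$. Its labeled path space is $\mathfrak L(\Lambda)$. The follower set graph of a sofic $\Lambda^*$: vertex set $\Omega$; for each $[\underline\mu]\in\Omega$ and $(i,k)$ with $\delta_i(k)*\underline\mu\in\Lambda^*$ an edge of colour $i$ labeled $\delta_i(k)$ with source $[\underline\mu]$ and range $[\delta_i(k)*\underline\mu]$; $\Lambda$ is the path category modulo the equivalence generated by $ef\sim f'e'$ whenever $\mathfrak L(e)*\mathfrak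 L(f)=\mathfrak L(f')*\mathfrak L(e')$ (this gives a labeled higher rank $N$-graph). *)

(* Defs.v *)
From mathcomp Require Import all_boot.
From Stdlib Require Import FunctionalExtensionality.
Set Implicit Arguments. Unset Strict Implicit. Unset Printing Implicit Defensive.

(** * N-tuples of words over the alphabet [d] = 'I_d  ((F_+^d)^N) *)
Definition mword (d N : nat) := {ffun 'I_N -> seq 'I_d}.

Section Words.
Variables d N : nat.
Implicit Types u v w q mu nu : mword d N.

Definition mcat u v : mword d N := [ffun i => u i ++ v i].
Definition mempty : mword d N := [ffun => [::]].
Definition delta (i : 'I_N) (k : 'I_d) : mword d N :=
  [ffun j => if j == i then [:: k] else [::]].
Definition mlen_le u (n : 'I_N -> nat) := forall i, size (u i) <= n i.
Definition subword v u := exists w q, u = mcat (mcat w v) q.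

Lemma mcatA u v w : mcat (mcat u v) w = mcat u (mcat v w).
Proof. by apply/ffunP => i; rewrite !ffunE catA. Qed.

Definition factorial_language (L : mword d N -> Prop) :=
  (forall i : 'I_N, exists k : 'I_d, L (delta i k)) /\
  (forall u v, L u -> subword v u -> L v).

Definition sim_n (L : mword d N -> Prop) (n : 'I_N -> nat) mu nu :=
  forall w, mlen_le w n -> (L (mcat w mu) <-> L (mcat w nu)).
Definition sim (L : mword d N -> Prop) mu nu :=
  forall w, L (mcat w mu) <-> L (mcat w nu).

Definition sofic (L : mword d N -> Prop) :=
  exists m : 'I_N -> nat, forall n : 'I_N -> nat, (forall i, m i <= n i) ->
    forall mu nu, L mu -> L nu -> (sim_n L n mu nu <-> sim L mu nu).

(** follower set of mu; [mu] = [nu] iff follower mu = follower nu, so a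
    vertex of Omega = L/~ is represented by the follower set of any of
    its representatives. *)
Definition follower (L : mword d N -> Prop) mu : mword d N -> Prop :=
  fun w => L (mcat w mu).

Definition Omega (L : mword d N -> Prop) :=
  {F : mword d N -> Prop | exists mu, L mu /\ F = follower L mu}.

(** edge of colour i labeled delta_i(k) with source [mu], defined iff
    delta_i(k) * mu \in L, i.e. iff delta_i(k) lies in the follower set. *)
Record fedge (L : mword d N -> Prop) := FEdge {
  fe_src : Omega L;
  fe_col : 'I_N;
  fe_letter : 'I_d;
  fe_ok : sval fe_src (delta fe_col fe_letter) }.

Lemma fe_range_proof (L : mword d N -> Prop) (e : fedge L) :
  exists mu, L mu /\
    (fun w => sval (fe_src e) (mcat w (delta (fe_col e) (fe_letter e))))
    = follower L mu.
Proof.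
case: e => [[F HF] i k] /= ok.
case: HF => mu [Lmu EF]; subst F.
exists (mcat (delta i k) mu); split; first by [].
by apply: functional_extensionality => w; rewrite /follower mcatA.
Qed.

(** range of the edge: [delta_i(k) * mu] *)
Definition fe_rng (L : mword d N -> Prop) (e : fedge L) : Omega L :=
  exist _ _ (fe_range_proof e).

Definition fe_lab (L : mword d N -> Prop) (e : fedge L) : mword d N :=
  delta (fe_col e) (fe_letter e).

(** e_1 e_2 ... e_n is a path (composition right to left):
    s(e_j) = r(e_{j+1}) *)
Fixpoint fpath_ok (L : mword d N -> Prop) (es : seq (fedge L)) : Prop :=
  match es with
  | e :: ((e' :: _) as t) => fe_src e = fe_rng e' /\ fpath_ok t
  | _ => True
  end.

Definition path_label (L : mword d N -> Prop) (es : seq (fedge L)) :=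
  foldr (fun e acc => mcat (fe_lab e) acc) mempty es.

(** labeled path space of the follower set graph: labels of vertices
    (empty paths) and of nonempty edge paths.  Since the equivalence
    defining Lambda preserves labels, these are exactly the labels of
    the morphisms of Lambda. *)
Definition follower_path_space (L : mword d N -> Prop) (u : mword d N) :=
  (exists v : Omega L, u = mempty) \/
  (exists es : seq (fedge L), es <> [::] /\ fpath_ok es /\ u = path_label es).

End Words.

Record labeled_hrgraph (d N : nat) := LHRGraph {
  Obj : Type;
  Mor : Type;
  hr : Mor -> Obj;
  hs : Mor -> Obj;
  hid : Obj -> Mor;
  hcomp : Mor -> Mor -> Mor; (* hcomp f g = f g, meaningful if hs f = hr g *)
  hdeg : Mor -> 'I_N -> nat;
  hlab : Mor -> mword d N;
  mor_countable : exists c : Mor -> nat, injective c;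
  hs_id : forall v, hs (hid v) = v;
  hr_id : forall v, hr (hid v) = v;
  hr_comp : forall f g, hs f = hr g -> hr (hcomp f g) = hr f;
  hs_comp : forall f g, hs f = hr g -> hs (hcomp f g) = hs g;
  hcomp_id_l : forall f, hcomp (hid (hr f)) f = f;
  hcomp_id_r : forall f, hcomp f (hid (hs f)) = f;
  hcompA : forall f g h, hs f = hr g -> hs g = hr h ->
     hcomp f (hcomp g h) = hcomp (hcomp f g) h;
  hdeg_id : forall v i, hdeg (hid v) i = 0;
  hdeg_comp : forall f g, hs f = hr g ->
     forall i, hdeg (hcomp f g) i = hdeg f i + hdeg g i;
  unique_fact : forall (l : Mor) (m n : 'I_N -> nat),
     (forall i, hdeg l i = m i + n i) ->
     exists mu nu, [/\ hs mu = hr nu, l = hcomp mu nu,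
                      (forall i, hdeg mu i = m i) & (forall i, hdeg nu i = n i)] /\
     forall mu' nu', hs mu' = hr nu' -> l = hcomp mu' nu' ->
        (forall i, hdeg mu' i = m i) -> (forall i, hdeg nu' i = n i) ->
        mu' = mu /\ nu' = nu;
  (* labeling: a functor into ((F_+^d)^N, * ) with |L(l)| = d(l);
     equivalently the multiplicative extension of an edge labeling with
     L(e) = delta_i(k) for e of colour i *)
  hlab_id : forall v, hlab (hid v) = mempty d N;
  hlab_comp : forall f g, hs f = hr g -> hlab (hcomp f g) = mcat (hlab f) (hlab g);
  hlab_deg : forall f i, size (hlab f i) = hdeg f i
}.

Definition finitely_many_vertices d N (G : labeled_hrgraph d N) :=
  exists (n : nat) (f : 'I_n -> Obj G), forall v : Obj G, exists i, f i = v.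

Definition labeled_path_space d N (G : labeled_hrgraph d N) (u : mword d N) :=
  exists l : Mor G, u = hlab l.

(* Main.v *)
From Stdlib Require Import Classical ClassicalEpsilon FunctionalExtensionality.
Require Import Defs.
From mathcomp Require Import all_boot.
Set Implicit Arguments. Unset Strict Implicit. Unset Printing Implicit Defensive.

Section Aux.
Variables d N : nat.

Lemma mcat0m (u : mword d N) : mcat (mempty d N) u = u.
Proof. by apply/ffunP => i; rewrite !ffunE. Qed.

Lemma mcatm0 (u : mword d N) : mcat u (mempty d N) = u.
Proof. by apply/ffunP => i; rewrite !ffunE cats0. Qed.

Definition msize (u : mword d N) := \sum_(j < N) size (u j).

Lemma peel (u : mword d N) : u <> mempty d N ->
  exists i k u', u = mcat (delta i k) u' /\ msize u' < msize u.
Proof.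
move=> Hu.
case: (pickP (fun j => u j != [::])) => [i Hi | Hnone]; last first.
  exfalso; apply: Hu; apply/ffunP => j; rewrite ffunE.
  by have := Hnone j; case: (u j).
case Eui: (u i) Hi => [|k s] // _.
exists i, k, [ffun j => if j == i then s else u j]; split.
  apply/ffunP => j; rewrite !ffunE.
  by case: (j =P i) => [->|_] //=; rewrite Eui.
rewrite /msize (bigD1 i) //= [X in _ < X](bigD1 i) //= ffunE eqxx Eui /=.
rewrite (eq_bigr (fun j => size (u j))); last by move=> j /negbTE Hj; rewrite ffunE Hj.
by rewrite addSn.
Qed.

Variable L : mword d N -> Prop.
Hypothesis FL : factorial_language L.

Lemma build n : forall u, msize u < n -> L u -> u <> mempty d N ->
  exists (e : fedge L) t, fpath_ok (e :: t) /\ u = path_label (e :: t) /\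
    sval (fe_rng e) = follower L u.
Proof.
elim: n => [|n IH] u // Hn Lu Hne.
have [i [k [u' [Eu Hs]]]] := peel Hne.
have Lu' : L u'.
  apply: (proj2 FL u) => //; exists (delta i k), (mempty d N).
  by rewrite mcatm0.
have rngE : forall src : Omega L, sval src = follower L u' ->
   forall ok : sval src (delta i k),
   sval (fe_rng (@FEdge d N L src i k ok)) = follower L u.
  move=> src Hsrc ok /=; rewrite Hsrc.
  by apply: functional_extensionality => w; rewrite /follower Eu mcatA.
case: (eqVneq u' (mempty d N)) => [Hu'0|Hu'0].
  pose src : Omega L := exist _ (follower L u') (ex_intro _ u' (conj Lu' erefl)).
  have ok : sval src (delta i k) by rewrite /= /follower -Eu.
  exists (@FEdge d N L src i k ok), [::]; split => //; split; last exact: rngE.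
  by rewrite /path_label /= /fe_lab /= Eu Hu'0.
have Hs' : msize u' < n by exact: leq_trans Hs (ltnSE Hn).
have [e' [t [Hp [Eu' Hr]]]] := IH u' Hs' Lu' (elimN eqP Hu'0).
have ok : sval (fe_rng e') (delta i k) by rewrite Hr /follower -Eu.
exists (@FEdge d N L (fe_rng e') i k ok), (e' :: t); split; first by split.
split; last exact: rngE.
by rewrite Eu {1}Eu'.
Qed.

Lemma path_sound (t : seq (fedge L)) : forall e, fpath_ok (e :: t) ->
  forall w, sval (fe_rng e) w -> exists q, L (mcat (mcat w (path_label (e :: t))) q).
Proof.
elim: t => [|e' t IH] e.
  move=> _ w /=.
  have [mu [Lmu Hmu]] := proj2_sig (fe_src e).
  rewrite /= Hmu /follower => H.
  by exists mu; rewrite /path_label /= mcatm0.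
move=> [Hse Hp] w /=; rewrite Hse => H.
have [q Hq] := IH e' Hp _ H.
by exists q; rewrite -mcatA.
Qed.

End Aux.

Lemma bound_lemma (X : eqType) d N (D : X -> mword d N -> Prop) (s : seq X) :
  exists m : 'I_N -> nat, forall p, p \in s -> (exists w, D p w) ->
    exists w, D p w /\ mlen_le w m.
Proof.
elim: s => [|x s [m1 IH]]; first by exists (fun _ => 0).
case: (classic (exists w, D x w)) => [[w0 Hw0]|Hno].
  exists (fun j => maxn (m1 j) (size (w0 j))) => p; rewrite in_cons.
  case/orP => [/eqP -> _|Hp Hex].
    by exists w0; split => // j; apply: leq_maxr.
  have [w [Hw Hl]] := IH p Hp Hex.
  by exists w; split => // j; apply: leq_trans (Hl j) (leq_maxl _ _).
exists m1 => p; rewrite in_cons; case/orP => [/eqP -> //|Hp Hex].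
exact: IH.
Qed.

Theorem proposition9p7 (d N : nat) (L : mword d N -> Prop) :
  factorial_language L ->
  (sofic L -> forall u : mword d N, L u <-> follower_path_space L u) /\
  (forall G : labeled_hrgraph d N, finitely_many_vertices G ->
     (forall u : mword d N, L u <-> labeled_path_space G u) -> sofic L).
Proof.
move=> FL; split.
  move=> _ u; split.
    move=> Lu; case: (eqVneq u (mempty d N)) => [Hu|Hu].
      left; exists (exist _ (follower L u) (ex_intro _ u (conj Lu erefl))).
      exact: Hu.
    right; have [e [t [Hp [Eu _]]]] := build FL (ltnSn (msize u)) Lu (elimN eqP Hu).
    by exists (e :: t).
  case=> [[v ->]|[[|e t] [Hne [Hp ->]]]] //.
    case: v => F [mu [Lmu _]].
    apply: (proj2 FL mu) => //; exists mu, (mempty d N).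
    by rewrite !mcatm0.
  have H0 : sval (fe_rng e) (mempty d N).
    have [mu [Lmu ->]] := proj2_sig (fe_rng e).
    by rewrite /follower mcat0m.
  have [q Hq] := path_sound Hp H0.
  apply: (proj2 FL _ _ Hq); exists (mempty d N), q.
  by rewrite mcat0m.
move=> G [n [f fsurj]] HL.
pose P (mu : mword d N) (i : 'I_n) :=
  exists b, hlab b = mu /\ hr b = f i.
pose Q (i : 'I_n) (w : mword d N) := exists a, hs a = f i /\ hlab a = w.
have key : forall w mu, L (mcat w mu) <-> exists i, P mu i /\ Q i w.
  move=> w mu; rewrite HL; split.
    case=> l Hl.
    have Hdeg : forall i, hdeg l i = size (w i) + size (mu i).
      by move=> i; rewrite -hlab_deg -Hl ffunE size_cat.
    have [a [b [[Hab El Ha Hb] _]]] := unique_fact Hdeg.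
    have Hlab : mcat (hlab a) (hlab b) = mcat w mu by rewrite -hlab_comp // -El.
    have Hsz : forall i, size (hlab a i) = size (w i).
      by move=> i; rewrite hlab_deg Ha.
    have Hc : forall i, (hlab a i == w i) && (hlab b i == mu i).
      move=> i; rewrite -eqseq_cat ?Hsz //.
      by move/ffunP: Hlab => /(_ i); rewrite !ffunE => ->.
    have [i Hi] := fsurj (hr b).
    exists i; split.
      exists b; split => //; apply/ffunP => j.
      by have /andP [_ /eqP] := Hc j.
    exists a; split; first by rewrite Hab.
    apply/ffunP => j; by have /andP [/eqP] := Hc j.
  case=> i [[b [Hb Hbr]] [a [Has Ha]]].
  exists (hcomp a b); rewrite hlab_comp ?Ha ?Hb //.
  by rewrite Has Hbr.
pose B (mu : mword d N) : {ffun 'I_n -> bool} :=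
  [ffun i => if excluded_middle_informative (P mu i) then true else false].
have BP : forall mu i, B mu i <-> P mu i.
  move=> mu i; rewrite /B ffunE.
  by case: (excluded_middle_informative (P mu i)).
pose F (s : {ffun 'I_n -> bool}) w := exists i, s i /\ Q i w.
have folE : forall w mu, L (mcat w mu) <-> F (B mu) w.
  move=> w mu; rewrite key; split; case=> i [H1 H2]; exists i; split => //;
  by apply/BP.
pose D (p : {ffun 'I_n -> bool} * {ffun 'I_n -> bool}) w := ~ (F p.1 w <-> F p.2 w).
have [m Hm] := bound_lemma D (enum {: {ffun 'I_n -> bool} * {ffun 'I_n -> bool}}).
exists m => nn Hmn mu nu _ _; split; last by move=> Hs w _; apply: Hs.
move=> Hsn w; apply: NNPP => Hnot.
have Hex : exists w, D (B mu, B nu) w.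
  exists w; rewrite /D /= -!folE; exact: Hnot.
have [w' [Hw' Hl]] := Hm _ (mem_enum _ _) Hex.
apply: Hw'; rewrite /= -!folE; apply: Hsn => j.
exact: leq_trans (Hl j) (Hmn j).
Qed.
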